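(* Let $\Gamma$ be a strongly connected digraph on $[n]$, let $S=S(\Gamma)$ be its total sandpile group, and let $S_i=S_i(\Gamma)$ for $i\in[n]$ be its sandpile groups at the vertices. Then: (1) for every $i$ there is a (canonical) surjection $S_i\to S$; (2) $|S|=\gcd\{|S_i|: i\in[n]\}$; (3) if $G$ is a finite abelian group such that for every $i\in[n]$ there is a surjection $S_i\to G$, then there is a surjection $S\to G$.
   Context: Digraphs may have multiple edges (and loops). $\deg(i,j)$ is the number of edges from $i$ to $j$, and $\mathrm{outdeg}(i)$ is the number of edges leaving $i$. A digraph is strongly connected if there is a directed path from every vertex to every other vertex. The Laplacian $L$ is the $n\times n$ integer matrix with $L_{ij}=-\deg(j,i)$ for $i\ne j$ and $L_{jj}=\mathrm{outdeg}(j)-\deg(j,j)$, so its columns sum to $0$. $L_i$ is the $(n-1)\times(n-1)$ matrix obtained from $L$ by deleting row $i$ and column $i$. The sandpile group at vertex $i$ is $S_i(\Gamma)=\mathbb{Z}^{n-1}/L_i\mathbb{Z}^{n-1}$; it is finite when $\Gamma$ is strongly connected. The total sandpile group is $S(\Gamma)=\mathbb{Z}^n_0/L\mathbb{Z}^n$, where $\mathbb{Z}^n_0$ is the subgroup of $\mathbb{Z}^n$ of vectors with entry sum $0$. *)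

(* Defs.v *)
From HB Require Import structures.
From mathcomp Require Import all_boot all_order all_algebra.
Set Implicit Arguments. Unset Strict Implicit. Unset Printing Implicit Defensive.
Import GRing.Theory.
Local Open Scope ring_scope.

(* A digraph (with multiple edges and loops) on the vertex set 'I_n is given by
   its multiplicity function: deg i j = number of edges from i to j. *)
Definition outdeg n (deg : 'I_n -> 'I_n -> nat) (j : 'I_n) : nat :=
  (\sum_(k < n) deg j k)%N.

Definition strongly_connected n (deg : 'I_n -> 'I_n -> nat) : Prop :=
  forall i j : 'I_n, connect [rel a b | (0 < deg a b)%N] i j.

Definition laplacian n (deg : 'I_n -> 'I_n -> nat) : 'M[int]_n :=
  \matrix_(i, j) (if i == j then (outdeg deg j)%:Z - (deg j j)%:Z
                  else - (deg j i)%:Z).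

Definition reduced_laplacian n (deg : 'I_n -> 'I_n -> nat) (i : 'I_n)
  : 'M[int]_n.-1 :=
  \matrix_(a, b) laplacian deg (lift i a) (lift i b).

Definition colspan m k (M : 'M[int]_(m, k)) (y : 'cV[int]_m) : Prop :=
  exists x : 'cV[int]_k, y = M *m x.
Definition sum_zero m (y : 'cV[int]_m) : Prop := \sum_(k < m) y k 0 = 0.
Definition allZ m (y : 'cV[int]_m) : Prop := True.

(* A quotient group A/B (B a subgroup of A <= Z^m) is represented by the pair
   (A, B).  [quot_card A B k] : the quotient A/B is finite of order k,
   i.e. there are k elements of A forming a complete, irredundant system of
   representatives of the cosets of B in A. *)
Definition quot_card m (A B : 'cV[int]_m -> Prop) (k : nat) : Prop :=
  exists r : 'I_k -> 'cV[int]_m,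
    (forall j, A (r j)) /\
    (forall x, A x -> exists! j, B (x - r j)).

(* A surjective group homomorphism A/B -> A'/B', given by a map f on
   representatives that is well defined and additive modulo B'. *)
Definition quot_surj m m' (A B : 'cV[int]_m -> Prop)
  (A' B' : 'cV[int]_m' -> Prop) : Prop :=
  exists f : 'cV[int]_m -> 'cV[int]_m',
    (forall x, A x -> A' (f x)) /\
    (forall x y, A x -> A y -> B' (f (x + y) - f x - f y)) /\
    (forall x, B x -> B' (f x)) /\
    (forall y, A' y -> exists2 x, A x & B' (y - f x)).

Definition quot_surj_grp m (A B : 'cV[int]_m -> Prop) (G : finZmodType) : Prop :=
  exists g : 'cV[int]_m -> G,
    (forall x y, A x -> A y -> g (x + y) = g x + g y) /\
    (forall x, B x -> g x = 0) /\
    (forall z : G, exists2 x, A x & g x = z).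

Definition SandI n (deg : 'I_n -> 'I_n -> nat) (i : 'I_n) :=
  (@allZ n.-1, colspan (reduced_laplacian deg i)).
Definition SandT n (deg : 'I_n -> 'I_n -> nat) :=
  (@sum_zero n, colspan (laplacian deg)).

(* Main.v *)
Require Import Defs.
From HB Require Import structures.
From mathcomp Require Import all_boot all_order all_algebra.
From mathcomp Require Import all_fingroup finalg cyclic zify ring.
From Stdlib Require Import ClassicalEpsilon.
Set Implicit Arguments. Unset Strict Implicit. Unset Printing Implicit Defensive.
Import Order.TTheory GRing.Theory Num.Theory.
Local Open Scope ring_scope.

Definition asb (P : Prop) : bool := if excluded_middle_informative P then true else false.
Lemma asbP (P : Prop) : reflect P (asb P).
Proof. rewrite /asb; case: excluded_middle_informative => h; by constructor. Qed.

Definition subgrp m (P : 'cV[int]_m -> Prop) :=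
  P 0 /\ (forall x y, P x -> P y -> P (x - y)).

Lemma sg0 m (P : 'cV[int]_m -> Prop) : subgrp P -> P 0.
Proof. by case. Qed.
Lemma sgB m (P : 'cV[int]_m -> Prop) x y : subgrp P -> P x -> P y -> P (x - y).
Proof. by case=> _ h; apply: h. Qed.
Lemma sgN m (P : 'cV[int]_m -> Prop) x : subgrp P -> P x -> P (- x).
Proof. by move=> h hx; rewrite -sub0r; apply: sgB => //; apply: sg0. Qed.
Lemma sgD m (P : 'cV[int]_m -> Prop) x y : subgrp P -> P x -> P y -> P (x + y).
Proof. by move=> h hx hy; rewrite -[y]opprK; apply: sgB => //; apply: sgN. Qed.
Lemma sgBr m (P : 'cV[int]_m -> Prop) x y : subgrp P -> P (x - y) -> P (y - x).
Proof. by move=> h hx; rewrite -opprB; apply: sgN. Qed.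
Lemma sgT m (P : 'cV[int]_m -> Prop) x y z : subgrp P -> P (x - y) -> P (y - z) -> P (x - z).
Proof.
move=> h h1 h2; have := sgD h h1 h2.
by rewrite addrA subrK.
Qed.

Lemma qcard_fin m (A B : 'cV[int]_m -> Prop) (T : finType) (r : T -> 'cV[int]_m) :
  (forall t, A (r t)) -> (forall x, A x -> exists! t, B (x - r t)) ->
  quot_card A B #|T|.
Proof.
move=> hA hu; exists (fun j => r (enum_val j)); split=> [j|x Ax]; first exact: hA.
have [t [Bt tu]] := hu x Ax.
exists (enum_rank t); split; first by rewrite enum_rankK.
by move=> j Bj; rewrite (tu _ Bj) enum_valK.
Qed.

Lemma cover_card m (A B : 'cV[int]_m -> Prop) (T : finType) (r : T -> 'cV[int]_m) :
  subgrp B -> (forall t, A (r t)) -> (forall x, A x -> exists t, B (x - r t)) ->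
  exists k, quot_card A B k.
Proof.
move=> sB hA hc.
pose eqv t t' := asb (B (r t - r t')).
pose C := [set t | [forall t', eqv t' t ==> (enum_rank t <= enum_rank t')%N]].
exists #|C|.
exists (fun j => r (enum_val j)); split=> [j|x Ax]; first exact: hA.
have [t Bt] := hc x Ax.
have eqvtt : eqv t t by apply/asbP; rewrite subrr; apply: sg0.
case: (arg_minnP (fun t' => enum_rank t' : nat) eqvtt) => t0 /asbP e0 min0.
have t0C : t0 \in C.
  rewrite inE; apply/forallP => t'; apply/implyP => /asbP e1.
  apply: min0; apply/asbP; exact: sgT sB e0 (sgBr sB e1).
have Bt0 : B (x - r t0) by apply: sgT sB Bt e0.
exists (enum_rank_in t0C t0); split; first by rewrite enum_rankK_in.
move=> j Bj.
have jC := enum_valP j.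
have e2 : B (r (enum_val j) - r t0) by apply: sgT sB (sgBr sB Bj) Bt0.
have le1 : (enum_rank (enum_val j) <= enum_rank t0)%N.
  by move: jC; rewrite inE => /forallP /(_ t0) /implyP; apply; apply/asbP; apply: sgBr.
have le2 : (enum_rank t0 <= enum_rank (enum_val j))%N.
  by move: t0C; rewrite inE => /forallP /(_ (enum_val j)) /implyP; apply; apply/asbP.
have eq : enum_val j = t0.
  by apply: enum_rank_inj; apply/val_inj/eqP; rewrite /= eqn_leq le1 le2.
by apply: (can_inj (enum_valK_in t0C)); rewrite enum_rankK_in.
Qed.

Lemma prod_card m (A Nn Ni : 'cV[int]_m -> Prop) s c :
  subgrp A -> subgrp Nn -> (forall x, Nn x -> A x) -> (forall x, Ni x -> Nn x) ->
  quot_card A Nn s -> quot_card Nn Ni c -> quot_card A Ni (s * c).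
Proof.
move=> sA sN NA iN [r1 [h1A h1u]] [r2 [h2A h2u]].
rewrite -[s]card_ord -[c]card_ord -card_prod.
apply: (qcard_fin (r := fun p : 'I_s * 'I_c => r1 p.1 + r2 p.2)).
  by move=> [j l] /=; apply: sgD => //; apply: NA.
move=> x Ax; have [j [Bj ju]] := h1u x Ax.
have [l [Bl lu]] := h2u _ Bj.
exists (j, l); split; first by rewrite /= opprD addrA.
move=> [j' l'] /=; rewrite opprD addrA => H.
have Nj' : Nn (x - r1 j').
  by rewrite -[x - r1 j'](subrK (r2 l')); apply: sgD => //; apply: iN.
have ej := ju _ Nj'; subst j'.
by rewrite (lu _ H).
Qed.

Lemma trans_card m m' (A B : 'cV[int]_m -> Prop) (A' B' : 'cV[int]_m' -> Prop)
  (f : 'cV[int]_m -> 'cV[int]_m') k :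
  subgrp A -> (forall x y, f (x - y) = f x - f y) ->
  (forall x, A x -> A' (f x)) -> (forall x, A x -> (B x <-> B' (f x))) ->
  (forall y, A' y -> exists2 x, A x & f x = y) ->
  quot_card A B k -> quot_card A' B' k.
Proof.
move=> sA fB fA fB' fs [r [rA ru]].
exists (fun j => f (r j)); split=> [j|y Ay]; first exact: fA.
have [x Ax <-] := fs y Ay.
have [j [Bj ju]] := ru x Ax.
exists j; split.
  by rewrite -fB; apply/fB' => //; apply: sgB.
by move=> j' Bj'; apply: ju; apply/fB'; [apply: sgB | rewrite fB].
Qed.


Lemma sum_lift (R : nmodType) n (F : 'I_n.+1 -> R) (i : 'I_n.+1) :
  \sum_k F k = F i + \sum_(a < n) F (lift i a).
Proof. by rewrite (bigD1_ord i). Qed.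

Lemma lapE n (deg : 'I_n -> 'I_n -> nat) r j :
  laplacian deg r j = (r == j)%:R * (outdeg deg j)%:Z - (deg j r)%:Z.
Proof.
rewrite mxE; case: eqP => [->|_]; first by rewrite mul1r.
by rewrite mul0r sub0r.
Qed.

Lemma outdegE n (deg : 'I_n -> 'I_n -> nat) j :
  (outdeg deg j)%:Z = \sum_k (deg j k)%:Z.
Proof. by rewrite /outdeg (big_morph Posz PoszD (erefl (Posz 0))). Qed.

Lemma colsum n (deg : 'I_n -> 'I_n -> nat) j : \sum_r laplacian deg r j = 0.
Proof.
under eq_bigr do rewrite lapE.
rewrite sumrB (bigD1 j) //= eqxx mul1r big1 ?addr0 ?outdegE ?subrr //.
by move=> r /negbTE ->; rewrite mul0r.
Qed.

Lemma sumzero_L n (deg : 'I_n -> 'I_n -> nat) x : sum_zero (laplacian deg *m x).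
Proof.
rewrite /sum_zero; under eq_bigr do rewrite mxE.
rewrite exchange_big /=; apply: big1 => b _.
by rewrite -mulr_suml colsum mul0r.
Qed.

Definition del n (i : 'I_n.+1) (y : 'cV[int]_n.+1) : 'cV[int]_n := \col_a y (lift i a) 0.
Definition ins n (i : 'I_n.+1) (z : 'cV[int]_n) : 'cV[int]_n.+1 :=
  \col_k (match unlift i k with Some a => z a 0 | None => - \sum_a z a 0 end).
Definition ins0 n (i : 'I_n.+1) (z : 'cV[int]_n) : 'cV[int]_n.+1 :=
  \col_k (match unlift i k with Some a => z a 0 | None => 0 end).
Definition ee n (i : 'I_n) : 'cV[int]_n := delta_mx i 0.

Lemma delB n i (x y : 'cV[int]_n.+1) : del i (x - y) = del i x - del i y.
Proof. by apply/matrixP => a b; rewrite !mxE. Qed.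

Lemma insB n i (x y : 'cV[int]_n) : ins i (x - y) = ins i x - ins i y.
Proof.
apply/matrixP => k b; rewrite !mxE; case: unlift => [a|]; rewrite ?mxE //.
rewrite -opprD; congr (- _); rewrite -sumrB; apply: eq_bigr => a _; by rewrite !mxE.
Qed.

Lemma del_ins n i (z : 'cV[int]_n) : del i (ins i z) = z.
Proof. by apply/matrixP => a b; rewrite !mxE liftK ord1. Qed.

Lemma del_ins0 n i (z : 'cV[int]_n) : del i (ins0 i z) = z.
Proof. by apply/matrixP => a b; rewrite !mxE liftK ord1. Qed.

Lemma ins0_i n i (z : 'cV[int]_n) : ins0 i z i 0 = 0.
Proof. by rewrite mxE unlift_none. Qed.

Lemma sumzero_ins n i (z : 'cV[int]_n) : sum_zero (ins i z).
Proof.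
rewrite /sum_zero (sum_lift _ i) /ins !mxE unlift_none.
rewrite addrC; apply/eqP; rewrite subr_eq0; apply/eqP; apply: eq_bigr => a _; by rewrite mxE liftK.
Qed.

Lemma ins_del n i (y : 'cV[int]_n.+1) : sum_zero y -> ins i (del i y) = y.
Proof.
rewrite /sum_zero (sum_lift _ i) => hs.
apply/matrixP => k b; rewrite !ord1 mxE; case: unliftP => [a ->|->]; first by rewrite mxE.
apply/eqP; rewrite eq_sym -addr_eq0; apply/eqP; rewrite -[RHS]hs; congr (_ + _).
by apply: eq_bigr => a _; rewrite mxE.
Qed.

Lemma del_L n (deg : 'I_n.+1 -> 'I_n.+1 -> nat) i x :
  del i (laplacian deg *m x) =
  reduced_laplacian deg i *m del i x + x i 0 *: del i (laplacian deg *m ee i).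
Proof.
apply/matrixP => a b; rewrite !ord1 !mxE (sum_lift _ i) addrC; congr (_ + _).
  by apply: eq_bigr => c _; rewrite !mxE.
rewrite /ee mxE (sum_lift _ i) !mxE !eqxx mulr1 big1 ?addr0 1?mulrC //.
by move=> c _; rewrite !mxE (eq_sym (lift i c)) (negbTE (neq_lift _ _)) mulr0.
Qed.

Definition Ni n (deg : 'I_n -> 'I_n -> nat) (i : 'I_n) (y : 'cV[int]_n) :=
  exists x : 'cV[int]_n, x i 0 = 0 /\ y = laplacian deg *m x.

Lemma del_Ni n (deg : 'I_n.+1 -> 'I_n.+1 -> nat) i y :
  Ni deg i y -> colspan (reduced_laplacian deg i) (del i y).
Proof. by case=> x [x0 ->]; exists (del i x); rewrite del_L x0 scale0r addr0. Qed.

Lemma ins_colspan n (deg : 'I_n.+1 -> 'I_n.+1 -> nat) i z :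
  colspan (reduced_laplacian deg i) z -> Ni deg i (ins i z).
Proof.
case=> u ->; exists (ins0 i u); split; first exact: ins0_i.
by rewrite -[RHS](ins_del i (sumzero_L _ _)) del_L ins0_i scale0r addr0 del_ins0.
Qed.


Lemma sg_colspan m k (M : 'M[int]_(m, k)) : subgrp (colspan M).
Proof.
split; first by exists 0; rewrite mulmx0.
by move=> _ _ [x ->] [y ->]; exists (x - y); rewrite mulmxBr.
Qed.

Lemma sg_sumzero m : subgrp (@sum_zero m).
Proof.
split; first by rewrite /sum_zero big1 // => k _; rewrite mxE.
move=> x y; rewrite /sum_zero => hx hy.
rewrite (eq_bigr (fun k => x k 0 - y k 0)); first by rewrite sumrB hx hy subrr.
by move=> k _; rewrite !mxE.
Qed.

Lemma sg_allZ m : subgrp (@allZ m).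
Proof. by []. Qed.

Lemma sg_Ni n (deg : 'I_n -> 'I_n -> nat) i : subgrp (Ni deg i).
Proof.
split; first by exists 0; rewrite mxE mulmx0.
by move=> _ _ [x [x0 ->]] [y [y0 ->]]; exists (x - y); rewrite !mxE x0 y0 subrr mulmxBr.
Qed.

Lemma Ni_sub n (deg : 'I_n -> 'I_n -> nat) i y : Ni deg i y -> colspan (laplacian deg) y.
Proof. by case=> x [_ ->]; exists x. Qed.

Lemma colspan_sumzero n (deg : 'I_n -> 'I_n -> nat) y :
  colspan (laplacian deg) y -> sum_zero y.
Proof. by case=> x ->; apply: sumzero_L. Qed.

Lemma insD n i (x y : 'cV[int]_n) : ins i (x + y) = ins i x + ins i y.
Proof.
have h0 : ins i 0 = 0 by rewrite -(subrr 0) insB subrr.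
have hN : ins i (- y) = - ins i y by rewrite -sub0r insB h0 sub0r.
by rewrite -[y]opprK insB hN !opprK.
Qed.

Lemma part1 n (deg : 'I_n.+1 -> 'I_n.+1 -> nat) i :
  quot_surj (SandI deg i).1 (SandI deg i).2 (SandT deg).1 (SandT deg).2.
Proof.
rewrite /=; exists (ins i); split; first by move=> x _; apply: sumzero_ins.
split.
  move=> x y _ _; rewrite insD (addrC (ins i x)) addrK subrr.
  by exists 0; rewrite mulmx0.
split.
  by move=> x hx; apply: Ni_sub; apply: ins_colspan.
move=> y hy; exists (del i y) => //; rewrite ins_del // subrr.
by exists 0; rewrite mulmx0.
Qed.

Lemma cardSi_Ni n (deg : 'I_n.+1 -> 'I_n.+1 -> nat) i d :
  quot_card (@allZ n) (colspan (reduced_laplacian deg i)) d ->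
  quot_card (@sum_zero n.+1) (Ni deg i) d.
Proof.
apply: (trans_card (f := ins i)) => //.
- exact: insB.
- by move=> x _; apply: sumzero_ins.
- move=> x _; split; first exact: ins_colspan.
  by move=> /del_Ni; rewrite del_ins.
- by move=> y hy; exists (del i y) => //; rewrite ins_del.
Qed.

Lemma cardNi_Si n (deg : 'I_n.+1 -> 'I_n.+1 -> nat) i d :
  quot_card (@sum_zero n.+1) (Ni deg i) d ->
  quot_card (@allZ n) (colspan (reduced_laplacian deg i)) d.
Proof.
apply: (trans_card (f := del i)) => //.
- exact: sg_sumzero.
- exact: delB.
- move=> y hy; split; first exact: del_Ni.
  by move=> /ins_colspan; rewrite ins_del.
- by move=> x _; exists (ins i x); [apply: sumzero_ins | rewrite del_ins].
Qed.


Lemma maxprinc n (deg : 'I_n -> 'I_n -> nat) (hsc : strongly_connected deg)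
  (i : 'I_n) (y : 'I_n -> rat) : y i = 0 ->
  (forall j, j != i -> \sum_k (deg j k)%:R * (y j - y k) = 0) ->
  forall k, y k <= 0.
Proof.
move=> yi hh.
case: (@arg_maxP _ _ _ i predT y isT) => j0 _ Hmax.
suff yj0 : y j0 = 0 by move=> k; rewrite -yj0; apply: Hmax.
have step : forall x z, x != i -> y x = y j0 -> (0 < deg x z)%N -> y z = y j0.
  move=> x z xi yx dz.
  have h := hh x xi.
  have hpos : forall k, true -> 0 <= (deg x k)%:R * (y x - y k).
    by move=> k _; rewrite mulr_ge0 // subr_ge0 yx; apply: Hmax.
  have := psumr_eq0P hpos h (i:=z) isT => /eqP.
  by rewrite mulf_eq0 pnatr_eq0 eqn0Ngt dz /= subr_eq0 => /eqP <-.
have := hsc j0 i; move/connectP => [p pth eqi].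
suff : forall x, y x = y j0 -> path [rel a b | (0 < deg a b)%N] x p ->
         y j0 = 0 \/ y (last x p) = y j0.
  by move=> /(_ j0 erefl pth) [] // <-; rewrite -eqi yi.
elim: p {pth eqi} => [|z p IH] x yx; first by right.
rewrite /= => /andP [exz pz].
have [xi|xi] := eqVneq x i; first by left; rewrite -yx xi.
by apply: IH pz; apply: step xi yx exz.
Qed.

Lemma intr_nat (k : nat) : (k%:Z)%:~R = k%:R :> rat.
Proof. by []. Qed.

Lemma redE n (deg : 'I_n.+1 -> 'I_n.+1 -> nat) i a b :
  reduced_laplacian deg i a b = laplacian deg (lift i a) (lift i b).
Proof. by rewrite [LHS]mxE. Qed.

Lemma detLi n (deg : 'I_n.+1 -> 'I_n.+1 -> nat) (hsc : strongly_connected deg) i :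
  \det (reduced_laplacian deg i) != 0.
Proof.
apply/negP => /eqP H0.
have : \det (map_mx (intr : int -> rat) (reduced_laplacian deg i)) == 0.
  by rewrite det_map_mx H0.
case/det0P => v vn0 hv.
pose y k := match unlift i k with Some a => v 0 a | None => 0 end.
have yi : y i = 0 by rewrite /y unlift_none.
have yl a : y (lift i a) = v 0 a by rewrite /y liftK.
have hh : forall j, j != i -> \sum_k (deg j k)%:R * (y j - y k) = 0.
  move=> j; case: (unliftP i j) => [b ->|->]; last by rewrite eqxx.
  move=> _.
  have E1 : \sum_k (deg (lift i b) k)%:R * (y (lift i b) - y k) =
     (outdeg deg (lift i b))%:R * v 0 b - \sum_a (deg (lift i b) (lift i a))%:R * v 0 a.
    under eq_bigr do rewrite mulrBr.
    rewrite sumrB -mulr_suml yl /outdeg natr_sum; congr (_ - _).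
    by rewrite (sum_lift _ i) yi mulr0 add0r; apply: eq_bigr => a _; rewrite yl.
  have E2 : (v *m map_mx intr (reduced_laplacian deg i)) 0 b =
     v 0 b * (outdeg deg (lift i b))%:R - \sum_a v 0 a * (deg (lift i b) (lift i a))%:R.
    rewrite mxE.
    under eq_bigr do rewrite [map_mx _ _ _ _]mxE redE lapE rmorphB rmorphM /= !intr_nat mulrBr.
    rewrite sumrB (bigD1 b) //= eqxx mul1r big1 ?addr0 //.
    by move=> a /negbTE ab; rewrite (inj_eq (lift_inj (h:=i))) ab mul0r mulr0.
  by rewrite E1 mulrC -[X in _ - X](eq_bigr _ (fun a _ => mulrC _ _)) -E2 hv mxE.
have yle := maxprinc hsc yi hh.
have yge : forall k, - y k <= 0.
  apply: (maxprinc hsc (i := i) (y := fun k => - y k)); first by rewrite yi oppr0.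
  move=> j /hh hj.
  rewrite (eq_bigr (fun k => - ((deg j k)%:R * (y j - y k)))) ?sumrN ?hj ?oppr0 //.
  by move=> k _; rewrite -mulrN opprD.
apply/negP: vn0; apply/negPn/eqP/matrixP => a b; rewrite ord1 mxE -yl.
by apply/eqP; rewrite eq_le yle -oppr_le0 yge.
Qed.


Lemma Si_fin n (deg : 'I_n.+1 -> 'I_n.+1 -> nat) (hsc : strongly_connected deg) i :
  exists d, quot_card (@allZ n) (colspan (reduced_laplacian deg i)) d.
Proof.
have dn0 := detLi hsc i.
set Li := reduced_laplacian deg i in dn0 *.
set dl := \det Li in dn0 *.
pose D := `|dl|%N.
apply: (cover_card (T := {ffun 'I_n -> 'I_D}) (r := fun t => \col_a ((t a : nat)%:Z))).
- exact: sg_colspan.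
- by [].
move=> x _.
have lt : forall a, (`|(x a ord0 %% dl)%Z|%N < D)%N.
  by move=> a; rewrite -ltz_nat gez0_abs ?modz_ge0 // abszE ltz_mod.
exists [ffun a => Ordinal (lt a)].
exists (\adj Li *m \col_a (x a ord0 %/ dl)%Z).
rewrite mulmxA mul_mx_adj mul_scalar_mx; apply/matrixP => a b.
rewrite (ord1 b) !mxE ffunE /= gez0_abs ?modz_ge0 //.
by rewrite {1}(divz_eq (x a ord0) dl) addrK mulrC.
Qed.


Definition vv n (deg : 'I_n -> 'I_n -> nat) (i : 'I_n) := laplacian deg *m ee i.
Definition Ii n (deg : 'I_n -> 'I_n -> nat) (i : 'I_n) (t : int) := Ni deg i (t *: vv deg i).

Lemma Ni_scale n (deg : 'I_n -> 'I_n -> nat) (i : 'I_n) (k : int) (x : 'cV[int]_n) : Ni deg i x -> Ni deg i (k *: x).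
Proof. by case=> u [u0 ->]; exists (k *: u); rewrite mxE u0 mulr0 scalemxAr. Qed.

Lemma ker_Ii n (deg : 'I_n -> 'I_n -> nat) (w : 'cV[int]_n) (j : 'I_n) :
  laplacian deg *m w = 0 -> Ii deg j (w j 0).
Proof.
move=> hw; exists (w j 0 *: ee j - w); split.
  by rewrite !mxE !eqxx mulr1 subrr.
by rewrite mulmxBr hw subr0 -scalemxAr.
Qed.

Lemma detL0 n (deg : 'I_n.+1 -> 'I_n.+1 -> nat) : \det (laplacian deg) = 0.
Proof.
have : \det (map_mx (intr : int -> rat) (laplacian deg)) == 0.
  apply/det0P; exists (const_mx 1).
    by apply/negP => /eqP/matrixP/(_ ord0 ord0); rewrite !mxE; apply/eqP; rewrite oner_eq0.
  apply/matrixP => a j; rewrite [LHS]mxE [RHS]mxE.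
  under eq_bigr do rewrite [map_mx _ _ _ _]mxE [const_mx _ _ _]mxE mul1r.
  by rewrite -rmorph_sum /= colsum.
move=> /eqP h; apply/eqP; move: h; rewrite det_map_mx.
by move=> /eqP; rewrite /= intr_eq0.
Qed.

Lemma exI n (deg : 'I_n.+1 -> 'I_n.+1 -> nat) (hsc : strongly_connected deg) i :
  exists t : nat, (0 < t)%N /\ Ii deg i t%:Z.
Proof.
set Lz := laplacian deg.
pose w := \adj Lz *m ee i.
have hw : Lz *m w = 0 by rewrite mulmxA mul_mx_adj detL0 mul_scalar_mx scale0r.
have wi : w i 0 = \det (reduced_laplacian deg i).
  rewrite /w /ee -colE !mxE /cofactor -signr_odd addnn odd_double expr0 mul1r.
  by congr (\det _); apply/matrixP => a b; rewrite !mxE.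
have := @ker_Ii _ deg w i hw; rewrite wi => hI.
have dn0 := detLi hsc i.
exists `|\det (reduced_laplacian deg i)|%N; split; first by rewrite absz_gt0.
rewrite abszE; have [hp|hn] := lerP 0 (\det (reduced_laplacian deg i)).
  by rewrite ger0_norm.
by rewrite ltr0_norm //; move: (Ni_scale (-1) hI); rewrite scalerA mulN1r.
Qed.


Lemma Ii_sub n (deg : 'I_n -> 'I_n -> nat) i s t :
  Ii deg i s -> Ii deg i t -> Ii deg i (s - t).
Proof. by move=> hs ht; rewrite /Ii scalerBl; apply: (sgB (sg_Ni deg i)). Qed.

Lemma Ii_mul n (deg : 'I_n -> 'I_n -> nat) i k t : Ii deg i t -> Ii deg i (k * t).
Proof. by move=> ht; rewrite /Ii -scalerA; apply: Ni_scale. Qed.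

Lemma cgen n (deg : 'I_n.+1 -> 'I_n.+1 -> nat) (hsc : strongly_connected deg) :
  exists c : 'I_n.+1 -> nat, forall i,
    [/\ (0 < c i)%N, Ii deg i (c i)%:Z & forall t, Ii deg i t -> ((c i)%:Z %| t)%Z].
Proof.
have exP : forall i, exists t : nat, (0 < t)%N && asb (Ii deg i t%:Z).
  move=> i; have [t [t0 ht]] := exI hsc i; exists t; rewrite t0 /=; exact/asbP.
exists (fun i => ex_minn (exP i)) => i.
case: ex_minnP => c /andP [c0 /asbP Ic] minc; split => // t It.
apply/dvdz_mod0P.
have cn0 : c%:Z != 0 by rewrite eqz_nat -lt0n.
have Im : Ii deg i (t %% c%:Z)%Z.
  have -> : (t %% c%:Z)%Z = t - (t %/ c%:Z)%Z * c%:Z.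
    by rewrite {2}(divz_eq t c%:Z) addrAC subrr add0r.
  apply: Ii_sub => //; exact: Ii_mul.
have hge := modz_ge0 t cn0.
have hlt := ltz_mod t cn0.
apply/eqP; apply/negPn/negP => hne.
have hm : (0 < `|(t %% c%:Z)%Z|)%N by rewrite absz_gt0.
have Pm : (0 < `|(t %% c%:Z)%Z|)%N && asb (Ii deg i `|(t %% c%:Z)%Z|%N%:Z).
  by rewrite hm /=; apply/asbP; rewrite gez0_abs.
have := minc _ Pm; rewrite -lez_nat gez0_abs // => hle.
rewrite ger0_norm // in hlt.
by have := lt_le_trans hlt hle; rewrite ltxx.
Qed.


Lemma dvd_small (c : nat) (d : int) : (c%:Z %| d)%Z -> (`|d| < c)%N -> d = 0.
Proof.
move=> hd hlt.
have hd' : (c %| `|d|)%N := hd.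
case: (posnP `|d|) => [h0|hpos]; first lia.
have := dvdn_leq hpos hd'; lia.
Qed.

Lemma cardNNi n (deg : 'I_n -> 'I_n -> nat) (i : 'I_n) (c : nat) :
  (0 < c)%N -> Ii deg i c%:Z -> (forall t, Ii deg i t -> (c%:Z %| t)%Z) ->
  quot_card (colspan (laplacian deg)) (Ni deg i) c.
Proof.
move=> c0 Ic cdv.
rewrite -[X in quot_card _ _ X]card_ord.
apply: (qcard_fin (r := fun t : 'I_c => (t : nat)%:Z *: vv deg i)).
  by move=> t; exists ((t : nat)%:Z *: ee i); rewrite /vv scalemxAr.
move=> y [x ->].
have cn0 : c%:Z != 0 by rewrite eqz_nat -lt0n.
set m := (x i ord0 %% c%:Z)%Z.
have hge : 0 <= m := modz_ge0 _ cn0.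
have hlt : m < `|c%:Z| := ltz_mod _ cn0.
have lt : (`|m| < c)%N by lia.
have hex : Ni deg i (laplacian deg *m x - (`|m|%N)%:Z *: vv deg i).
  rewrite gez0_abs //.
  have -> : laplacian deg *m x - m *: vv deg i =
     laplacian deg *m (x - x i ord0 *: ee i) + (x i ord0 - m) *: vv deg i.
    by rewrite mulmxBr -scalemxAr [(x i ord0 - m) *: _]scalerBl /vv addrA subrK.
  apply: (sgD (sg_Ni deg i)).
    by exists (x - x i ord0 *: ee i); rewrite !mxE !eqxx mulr1 subrr.
  have -> : x i ord0 - m = (x i ord0 %/ c%:Z)%Z * c%:Z.
    by rewrite {1}(divz_eq (x i ord0) c%:Z) addrK.
  exact: Ii_mul.
exists (Ordinal lt); split; first exact: hex.
move=> j hj.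
have hd := sgB (sg_Ni deg i) hj hex.
have e : laplacian deg *m x - (j : nat)%:Z *: vv deg i -
   (laplacian deg *m x - (`|m|%N)%:Z *: vv deg i) =
   ((`|m|%N)%:Z - (j : nat)%:Z) *: vv deg i.
  by rewrite scalerBl opprB addrC addrA subrK.
rewrite e in hd.
have hdv := cdv _ hd.
have h0 := dvd_small hdv (_ : (_ < c)%N).
apply: val_inj => /=.
have : `|m|%N = j.
  suff: (`|m|%N)%:Z - (j : nat)%:Z = 0 by lia.
  by apply: h0; have := ltn_ord j; lia.
by [].
Qed.


Lemma gcd1 n (deg : 'I_n.+1 -> 'I_n.+1 -> nat) (c : 'I_n.+1 -> nat) :
  (forall i, [/\ (0 < c i)%N, Ii deg i (c i)%:Z & forall t, Ii deg i t -> ((c i)%:Z %| t)%Z]) ->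
  \big[gcdn/0%N]_i c i = 1%N.
Proof.
move=> hc.
have [c0 I0 _] := hc ord0.
case: I0 => u [u0 hu].
pose w := (c ord0)%:Z *: ee ord0 - u.
have hw : laplacian deg *m w = 0 by rewrite mulmxBr -scalemxAr -hu subrr.
set g := \big[gcdn/0%N]_i c i.
have gdv : forall j, (g %| c j)%N.
  by move=> j; apply: (elimT (dvdn_biggcdP _ _ _) (dvdnn g)).
have wdv : forall j, (g%:Z %| w j ord0)%Z.
  move=> j; have [_ _ hd] := hc j.
  apply: (@dvdz_trans (c j)%:Z); [exact: gdv | exact: (hd _ (@ker_Ii _ deg w j hw))].
have g0 : g != 0%N.
  apply/negP => /eqP g0; have := gdv ord0; rewrite g0 dvd0n; lia.
pose w' := \col_k (w k ord0 %/ g%:Z)%Z.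
have ww : w = g%:Z *: w'.
  apply/matrixP => a b; rewrite (ord1 b) [in RHS]mxE /w' [in RHS]mxE mulrC divzK //; exact: wdv.
have hw' : laplacian deg *m w' = 0.
  apply/eqP; move: hw; rewrite ww -scalemxAr => /eqP.
  by rewrite scalemx_eq0 eqz_nat (negbTE g0).
have [_ _ hd0] := hc ord0.
have := hd0 _ (@ker_Ii _ deg w' ord0 hw').
have -> : w' ord0 0 = ((c ord0) %/ g)%N%:Z.
  by rewrite !mxE !eqxx mulr1 u0 subr0 divz_nat.
rewrite /dvdz /= => hdv.
have gle : (g <= c ord0)%N := dvdn_leq c0 (gdv ord0).
have qpos : (0 < c ord0 %/ g)%N by rewrite divn_gt0 ?lt0n.
have := dvdn_leq qpos hdv.
case: (ltngtP g 1) => // [g1|g1] hle; first lia.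
have := ltn_Pdiv g1 c0; lia.
Qed.


Lemma S_fin n (deg : 'I_n.+1 -> 'I_n.+1 -> nat) (hsc : strongly_connected deg) :
  exists s, quot_card (@sum_zero n.+1) (colspan (laplacian deg)) s.
Proof.
have [d0 hd0] := Si_fin hsc ord0.
case: (cardSi_Ni hd0) => r [rA ru].
apply: (cover_card (r := r)); first exact: sg_colspan.
  exact: rA.
move=> x hx; have [j [hj _]] := ru x hx; exists j; exact: Ni_sub hj.
Qed.

Lemma part2 n (deg : 'I_n.+1 -> 'I_n.+1 -> nat) (hsc : strongly_connected deg) :
  exists ks : 'I_n.+1 -> nat,
     (forall i, quot_card (SandI deg i).1 (SandI deg i).2 (ks i)) /\
     quot_card (SandT deg).1 (SandT deg).2 (\big[gcdn/0%N]_(i < n.+1) ks i).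
Proof.
have [c hc] := cgen hsc.
have [s hs] := S_fin hsc.
exists (fun i => (s * c i)%N); split.
  move=> i /=; apply: cardNi_Si.
  have [c0 Ic cdv] := hc i.
  apply: (prod_card (sg_sumzero _) (sg_colspan _) (@colspan_sumzero _ deg) (@Ni_sub _ deg i) hs).
  exact: cardNNi.
have -> : \big[gcdn/0%N]_(i < n.+1) (s * c i)%N = (s * \big[gcdn/0%N]_(i < n.+1) c i)%N.
  by elim/big_rec2: _ => [|i a b _ ->]; rewrite ?muln0 ?muln_gcdr.
by rewrite (gcd1 hc) muln1.
Qed.


Lemma dvdz_ring (U W X Y Z : int) : (U %| X)%Z -> (W %| Y)%Z -> Z = X * Y -> (U * W %| Z)%Z.
Proof. by move=> h1 h2 ->; apply: dvdz_mul. Qed.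
Lemma dvdz_M (M X Z : int) : Z = M * X -> (M %| Z)%Z.
Proof. by move=> ->; apply: dvdz_mulr; apply: dvdzz. Qed.

Lemma IL (cs : nat -> nat) (K : nat) : forall M : nat, (0 < M)%N ->
  (forall i, (i < K)%N -> (0 < cs i)%N) ->
  coprime M (\big[gcdn/0%N]_(i < K) cs i) ->
  exists ms : nat -> int,
  [/\ forall i, (i < K)%N -> exists a b : int, ms i = a * (cs i)%:Z + b * M%:Z,
      forall i j, (i < K)%N -> (j < K)%N -> i != j -> (M%:Z %| ms i * ms j)%Z,
      forall i, (i < K)%N -> (M%:Z %| ms i * ms i - ms i)%Z &
      (M%:Z %| \sum_(i < K) ms i - 1)%Z].
Proof.
elim: K => [|K IH] M M0 cpos.
  rewrite big_ord0 /coprime gcdn0 => /eqP ->.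
  by exists (fun _ => 0); split => //; rewrite dvd1z.
rewrite big_ord_recr /= => cop.
set g' := \big[gcdn/0%N]_(i < K) cs i in cop.
have ck0 : (0 < cs K)%N by apply: cpos.
pose pi := \pi(cs K).
pose u := (M`_pi)%N; pose w := (M`_pi^')%N.
have Muw : (u * w = M)%N := partnC pi M0.
have cuw : coprime u w := coprime_partC pi M M.
have u0 : (0 < u)%N := part_gt0 pi M.
have gu : (gcdn (cs K) M %| u)%N.
  have pg : pi.-nat (gcdn (cs K) M) := pnat_dvd (dvdn_gcdl (cs K) M) (pnat_pi ck0).
  rewrite -(part_pnat_id pg); exact: partn_dvd M0 (dvdn_gcdr _ _).
have cug : coprime u g'.
  set d := gcdn u g'.
  have dpi : pi.-nat d := pnat_dvd (dvdn_gcdl u g') (part_pnat pi M).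
  have d0 : (0 < d)%N by rewrite gcdn_gt0 u0.
  have dck : coprime (cs K) d.
    rewrite /coprime -dvdn1 -(eqP cop) !dvdn_gcd dvdn_gcdl /=.
    rewrite (dvdn_trans (dvdn_gcdr _ _) (dvdn_gcdr u g')) andbT.
    rewrite andbT; exact: dvdn_trans (dvdn_gcdr _ _) (dvdn_trans (dvdn_gcdl u g') (dvdn_part pi M)).
  rewrite /coprime -/d; apply/eqP; apply: pnat_1 dpi _.
  by rewrite -coprime_pi'.
have [ms' [ha hb hc hd]] := IH u u0 (fun i hi => cpos i (ltnW hi)) cug.
case: (Bezoutz u w) => al [be hab].
have hab1 : al * u%:Z + be * w%:Z = 1 by rewrite hab /gcdz /= (eqP cuw).
have MZ : M%:Z = u%:Z * w%:Z by rewrite -Muw PoszM.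
exists (fun i => if i == K then al * u%:Z else be * w%:Z * ms' i); split.
- move=> i; rewrite ltnS leq_eqVlt => /orP [/eqP ->|hi]; rewrite ?eqxx.
    case: (Bezoutz (cs K) M) => x [y hxy].
    have gE : (gcdz (cs K) M) = (gcdn (cs K) M)%:Z by [].
    have uE : u%:Z = (u %/ gcdn (cs K) M)%N%:Z * (gcdn (cs K) M)%:Z by rewrite -PoszM divnK.
    exists (al * (u %/ gcdn (cs K) M)%N%:Z * x), (al * (u %/ gcdn (cs K) M)%N%:Z * y).
    rewrite uE -gE -hxy; ring.
  rewrite (ltn_eqF hi).
  have [a [b ->]] := ha i hi.
  exists (be * w%:Z * a), (be * b); rewrite MZ; ring.
- move=> i j; rewrite !ltnS (leq_eqVlt i) (leq_eqVlt j) => /orP [/eqP ->|hi] /orP [/eqP ->|hj].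
  + by rewrite eqxx.
  + move=> _; rewrite eqxx (ltn_eqF hj); apply: (@dvdz_M _ (al * be * ms' j)); rewrite MZ; ring.
  + move=> _; rewrite eqxx (ltn_eqF hi); apply: (@dvdz_M _ (al * be * ms' i)); rewrite MZ; ring.
  + move=> ij; rewrite (ltn_eqF hi) (ltn_eqF hj) MZ.
    apply: (@dvdz_ring _ _ (ms' i * ms' j) (be * w%:Z * (be * w%:Z))); first exact: hb.
      by apply: dvdz_mull; apply: dvdz_mull; apply: dvdzz.
    ring.
- move=> i; rewrite ltnS leq_eqVlt => /orP [/eqP ->|hi]; rewrite ?eqxx.
    apply: (@dvdz_M _ (- (al * be))); rewrite MZ.
    have e1 : al * u%:Z - 1 = - (be * w%:Z) by rewrite -hab1; ring.
    have -> : al * u%:Z * (al * u%:Z) - al * u%:Z = al * u%:Z * (al * u%:Z - 1) by ring.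
    rewrite e1; ring.
  rewrite (ltn_eqF hi).
  have e2 : be * w%:Z - 1 = - (al * u%:Z) by rewrite -hab1; ring.
  set m := ms' i.
  have -> : be * w%:Z * m * (be * w%:Z * m) - be * w%:Z * m =
     (m * m - m) * (be * w%:Z * (be * w%:Z)) + u%:Z * w%:Z * (- (al * be * m)).
    have -> : be * w%:Z * m * (be * w%:Z * m) - be * w%:Z * m =
       (m * m - m) * (be * w%:Z * (be * w%:Z)) + be * w%:Z * m * (be * w%:Z - 1) by ring.
    rewrite e2; ring.
  rewrite MZ; apply: rpredD; last exact: dvdz_M.
  apply: (@dvdz_ring _ _ _ (be * w%:Z * (be * w%:Z)) _ (hc i hi)) => //.
  by apply: dvdz_mull; apply: dvdz_mull; apply: dvdzz.
rewrite big_ord_recr /= eqxx.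
under eq_bigr => i _ do rewrite (ltn_eqF (ltn_ord i)).
rewrite -mulr_sumr; set S := \sum_(i < K) ms' i.
have -> : be * w%:Z * S + al * u%:Z - 1 = (S - 1) * (be * w%:Z) + (al * u%:Z + be * w%:Z - 1) by ring.
rewrite hab1 subrr addr0 MZ.
apply: (@dvdz_ring _ _ _ (be * w%:Z) _ hd) => //.
by apply: dvdz_mull; apply: dvdzz.
Qed.


Lemma dvd_kill (G : finZmodType) (z : G) (t : int) : ((#|G|)%:Z %| t)%Z -> z *~ t = 0.
Proof.
case/dvdzP => q ->; rewrite mulrzA.
have -> : z *~ q *~ (#|G|)%:Z = (z *~ q) *+ #|G| by [].
by rewrite -FinRing.zmodXgE -cardsT expg_cardG ?inE.
Qed.

Lemma add_scale m (G : zmodType) (f : 'cV[int]_m -> G) :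
  (forall x y, f (x + y) = f x + f y) -> forall (k : int) x, f (k *: x) = f x *~ k.
Proof.
move=> hadd.
have f0 : f 0 = 0 by apply: (addrI (f 0)); rewrite -hadd !addr0.
have fN : forall x, f (- x) = - f x.
  by move=> x; apply: (addrI (f x)); rewrite -hadd !subrr f0.
have fn : forall (k : nat) x, f (k%:Z *: x) = f x *+ k.
  move=> k x; elim: k => [|k IH]; first by rewrite scale0r f0 mulr0n.
  have -> : (k.+1)%:Z = k%:Z + 1 by rewrite -addn1 PoszD.
  by rewrite scalerDl scale1r hadd IH mulrSr.
case=> k x; first exact: fn.
by rewrite NegzE scaleNr fN fn mulrNz.
Qed.

Lemma delD n i (x y : 'cV[int]_n.+1) : del i (x + y) = del i x + del i y.
Proof. by apply/matrixP => a b; rewrite !mxE. Qed.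

Lemma sumzero_scale m (k : int) (y : 'cV[int]_m) : sum_zero y -> sum_zero (k *: y).
Proof.
rewrite /sum_zero => hy; rewrite (eq_bigr (fun a => k * y a 0)) ?hy -?mulr_sumr ?hy ?mulr0 //.
by move=> a _; rewrite mxE.
Qed.

Lemma part3 n (deg : 'I_n.+1 -> 'I_n.+1 -> nat) (hsc : strongly_connected deg)
  (G : finZmodType) :
  (forall i : 'I_n.+1, quot_surj_grp (SandI deg i).1 (SandI deg i).2 G) ->
  quot_surj_grp (SandT deg).1 (SandT deg).2 G.
Proof.
move=> Hg; rewrite /= in Hg *.
have [c hc] := cgen hsc.
pose gs i := proj1_sig (constructive_indefinite_description _ (Hg i)).
have gsP : forall i, [/\ forall x y, gs i (x + y) = gs i x + gs i y,
    forall x, colspan (reduced_laplacian deg i) x -> gs i x = 0 &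
    forall z, exists2 x, allZ x & gs i x = z].
  move=> i; have [ha [hb hc']] := proj2_sig (constructive_indefinite_description _ (Hg i)).
  by split => // x y; apply: ha.
pose h i y := gs i (del i y).
have hadd : forall i x y, h i (x + y) = h i x + h i y.
  by move=> i x y; rewrite /h delD; have [ha _ _] := gsP i; apply: ha.
have hNi : forall i y, Ni deg i y -> h i y = 0.
  by move=> i y /del_Ni hy; have [_ hb _] := gsP i; apply: hb.
have hsur : forall i z, exists x, sum_zero x /\ h i x = z.
  move=> i z; have [_ _ hs] := gsP i; have [x _ <-] := hs z.
  by exists (ins i x); split; [apply: sumzero_ins | rewrite /h del_ins].
have hscale : forall i k x, h i (k *: x) = h i x *~ k.
  by move=> i; apply: add_scale; apply: hadd.
have h0 : forall i, h i 0 = 0.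
  by move=> i; rewrite -(scale0r 0) hscale mulr0z.
have hvv : forall i, h i (vv deg i) *~ (c i)%:Z = 0.
  by move=> i; rewrite -hscale; apply: hNi; have [_ Ic _] := hc i.
pose M := #|G|.
have M0 : (0 < M)%N by apply/card_gt0P; exists 0.
pose cs k := c (inord k).
have cpos : forall k, (k < n.+1)%N -> (0 < cs k)%N by move=> k _; have [] := hc (inord k).
have cop : coprime M (\big[gcdn/0%N]_(k < n.+1) cs k).
  rewrite (eq_bigr c) ?(gcd1 hc) ?coprimen1 // => k _.
  by rewrite /cs inord_val.
have [ms [hma hmb hmc hmd]] := @IL cs n.+1 M M0 cpos cop.
pose m (i : 'I_n.+1) := ms i.
have hmv : forall i, h i (vv deg i) *~ m i = 0.
  move=> i; have [a [b hab]] := hma i (ltn_ord i); rewrite /m hab.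
  rewrite mulrzDr [a * _]mulrC (mulrzA _ (c (inord i))%:Z).
  rewrite /cs inord_val.
  by rewrite hvv mul0rz add0r dvd_kill // dvdz_mull // dvdzz.
exists (fun y => \sum_i h i y *~ m i); split; last split.
- move=> x y _ _; rewrite -big_split; apply: eq_bigr => i _.
  by rewrite hadd mulrzDl.
- move=> y [x ->]; apply: big1 => i _.
  have -> : laplacian deg *m x =
     laplacian deg *m (x - x i 0 *: ee i) + x i 0 *: vv deg i.
    by rewrite mulmxBr -scalemxAr /vv subrK.
  rewrite hadd hNi ?add0r.
    by rewrite hscale mulrzAC hmv mul0rz.
  by exists (x - x i 0 *: ee i); rewrite !mxE !eqxx mulr1 subrr.
- move=> z.
  pose xs i := proj1_sig (constructive_indefinite_description _ (hsur i z)).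
  have xsP : forall i, sum_zero (xs i) /\ h i (xs i) = z.
    by move=> i; apply: (proj2_sig (constructive_indefinite_description _ (hsur i z))).
  exists (\sum_j m j *: xs j).
    rewrite /=; elim/big_ind: _ => //; first exact: (sg0 (sg_sumzero _)).
      by move=> a b ha hb; apply: (sgD (sg_sumzero _)).
    by move=> j _; apply: sumzero_scale; have [] := xsP j.
  have hsum : forall i, h i (\sum_j m j *: xs j) = \sum_j h i (xs j) *~ m j.
    move=> i; rewrite (big_morph (h i) (hadd i) (h0 i)).
    by apply: eq_bigr => j _; rewrite hscale.
  under eq_bigr => i _ do rewrite hsum mulrz_suml (bigD1 i) //= (proj2 (xsP i)).
  rewrite (eq_bigr (fun i => z *~ m i)); last first.
    move=> i _; rewrite big1 ?addr0.
      rewrite -mulrzA; apply/eqP; rewrite -subr_eq0 -mulrzBr; apply/eqP.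
      by apply: dvd_kill; apply: hmc.
    move=> j ji; rewrite -mulrzA; apply: dvd_kill; apply: hmb => //.
  rewrite -mulrz_sumr; apply/eqP; rewrite -subr_eq0 -[X in _ - X]mulr1z -mulrzBr.
  by apply/eqP; apply: dvd_kill.
Qed.


Local Close Scope ring_scope.
Unset Implicit Arguments.

Theorem mainTheorem6 (n : nat) (deg : 'I_n -> 'I_n -> nat)
  (hn : (0 < n)%N) (hsc : strongly_connected deg) :
  (* (1) surjection S_i -> S for every i *)
  (forall i : 'I_n,
     quot_surj (SandI deg i).1 (SandI deg i).2 (SandT deg).1 (SandT deg).2) /\
  (* (2) |S| = gcd { |S_i| } (all these groups being finite) *)
  (exists ks : 'I_n -> nat,
     (forall i, quot_card (SandI deg i).1 (SandI deg i).2 (ks i)) /\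
     quot_card (SandT deg).1 (SandT deg).2 (\big[gcdn/0%N]_(i < n) ks i)) /\
  (* (3) *)
  (forall G : finZmodType,
     (forall i : 'I_n, quot_surj_grp (SandI deg i).1 (SandI deg i).2 G) ->
     quot_surj_grp (SandT deg).1 (SandT deg).2 G).
Proof.
case: n deg hn hsc => // n deg _ hsc.
split; first by move=> i; apply: part1.
split; first exact: part2.
by move=> G; apply: part3.
Qed.
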